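(* Let $P$ be a definite logic program, let $p(t_1,\ldots,t_n)$ be an atom, let $X_1,\ldots,X_n$ be distinct fresh variables, and let $\mathcal{C}_0=\langle p(t_1,\ldots,t_n)_{id} \;]\![\; p(X_1,\ldots,X_n)_{id}\rangle$ be the corresponding initial concolic state. Let $\mathcal{C}_0\leadsto\mathcal{C}_1\leadsto\cdots\leadsto\mathcal{C}_m$, $m\geq 0$, be a finite (possibly incomplete) concolic execution for $\mathcal{C}_0$ in $P$. Then for every $i\in\{0,\ldots,m\}$ such that $\mathcal{C}_i$ has the form $\langle \mathcal{B}^{c}_{\delta}\mid S \;]\![\; \mathcal{D}^{c'}_{\theta}\mid S'\rangle$ (the clause labels $c,c'$ possibly absent), the following hold: $|S|=|S'|$; $\mathcal{D}\leqslant\mathcal{B}$; $c=c'$ (when these labels are present); and $p(X_1,\ldots,X_n)\theta\leqslant p(t_1,\ldots,t_n)\delta$.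
   Context: Programs are definite logic programs; every clause $c$ has a unique label $\ell(c)$. Goals are conjunctions of atoms (including the special atoms $\mathsf{true}$ and $\mathsf{fail}$). For syntactic objects $s_1,s_2$, $s_1\leqslant s_2$ (''$s_1$ is more general than $s_2$'') means $s_1\theta=s_2$ for some substitution $\theta$. For an atom $A$, $\mathsf{clauses}(A,P)$ is the sequence (in program order) of renamed-apart clauses of $P$ whose heads unify with $A$. A concolic state has the form $\langle S\;]\![\; S'\rangle$ where $S$ (concrete part) and $S'$ (symbolic part) are sequences, separated by $\mid$, of goals each labeled with a substitution and possibly additionally with a program clause, written $\mathcal{B}_\delta$ or $\mathcal{B}^{c}_\delta$; $id$ is the identity substitution; $\textsc{success}_\delta$ and $\textsc{fail}_\delta$ denote final goals; $\epsilon$ is the empty sequence. The concolic transition relation $\leadsto$ is given by the rules: (success) $\langle \mathsf{true}_\delta\mid S\;]\![\;\mathsf{true}_\theta\mid S'\rangle\leadsto\langle\textsc{success}_\delta\;]\![\;\textsc{success}_\theta\rangle$. (failure) $\langle(\mathsf{fail},\mathcal{B})_\delta\;]\![\;(\mathsf{fail},\mathcal{B}')_\theta\rangle\leadsto\langle\textsc{fail}_\delta\;]\![\;\textsc{fail}_\theta\rangle$. (backtrack) if $S\neq\epsilon$: $\langle(\mathsf{fail},\mathcal{B})_\delta\mid S\;]\![\;(\mathsf{fail},\mathcal{B}')_\theta\mid S'\rangle\leadsto\langle S\;]\![\;S'\rangle$. (choice) if $\mathsf{clauses}(A,P)=c_1,\ldots,c_n$ with $n>0$: $\langle (A,\mathcal{B})_\delta\mid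 S\;]\![\;(A',\mathcal{B}')_\theta\mid S'\rangle\leadsto\langle (A,\mathcal{B})^{c_1}_\delta\mid\cdots\mid(A,\mathcal{B})^{c_n}_\delta\mid S\;]\![\;(A',\mathcal{B}')^{c_1}_\theta\mid\cdots\mid(A',\mathcal{B}')^{c_n}_\theta\mid S'\rangle$ (the step is labeled $c(\ell(c_1..c_n),\ell(d_1..d_k))$ where $d_1..d_k=\mathsf{clauses}(A',P)$). (choice_fail) if $\mathsf{clauses}(A,P)$ is empty: $\langle(A,\mathcal{B})_\delta\mid S\;]\![\;(A',\mathcal{B}')_\theta\mid S'\rangle\leadsto\langle(\mathsf{fail},\mathcal{B})_\delta\mid S\;]\![\;(\mathsf{fail},\mathcal{B}')_\theta\mid S'\rangle$. (unfold) if $\sigma=\mathrm{mgu}(A,H_1)$ and $\sigma'=\mathrm{mgu}(A',H_1)$: $\langle(A,\mathcal{B})^{H_1\leftarrow\mathcal{B}_1}_\delta\mid S\;]\![\;(A',\mathcal{B}')^{H_1\leftarrow\mathcal{B}_1}_\theta\mid S'\rangle\leadsto\langle(\mathcal{B}_1\sigma,\mathcal{B}\sigma)_{\delta\sigma}\mid S\;]\![\;(\mathcal{B}_1\sigma',\mathcal{B}'\sigma')_{\theta\sigma'}\mid S'\rangle$. *)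

(* Defs.v *)
From Stdlib Require Import List Arith.
Import ListNotations.

Inductive term : Type :=
| Var : nat -> term
| Fn  : nat -> list term -> term.

Inductive atom : Type := Atom : nat -> list term -> atom.

(* The special atom true is the neutral element of conjunction: a goal is a
   list of goal atoms, the empty list being the goal [true]. *)
Inductive gatom : Type :=
| GFail : gatom
| GAt   : atom -> gatom.

Definition goal := list gatom.

Record clause := mkClause { head : atom ; body : goal }.

Definition program := list clause.

Definition subst := nat -> term.
Definition id_subst : subst := Var.

Fixpoint tapply (s : subst) (t : term) : term :=
  match t with
  | Var x => s x
  | Fn f ts => Fn f (map (tapply s) ts)
  end.

Definition aapply (s : subst) (a : atom) : atom :=
  match a with Atom p ts => Atom p (map (tapply s) ts) end.

Definition gaapply (s : subst) (g : gatom) : gatom :=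
  match g with GFail => GFail | GAt a => GAt (aapply s a) end.

Definition gapply (s : subst) (B : goal) : goal := map (gaapply s) B.

Definition compose (d s : subst) : subst := fun x => tapply s (d x).

Definition atom_le (a1 a2 : atom) : Prop := exists th, aapply th a1 = a2.
Definition goal_le (g1 g2 : goal) : Prop := exists th, gapply th g1 = g2.

Fixpoint occurs (x : nat) (t : term) : bool :=
  match t with
  | Var y => Nat.eqb x y
  | Fn _ ts => existsb (occurs x) ts
  end.

Definition occurs_atom (x : nat) (a : atom) : bool :=
  match a with Atom _ ts => existsb (occurs x) ts end.

Definition occurs_gatom (x : nat) (g : gatom) : bool :=
  match g with GFail => false | GAt a => occurs_atom x a end.

Definition occurs_goal (x : nat) (B : goal) : bool := existsb (occurs_gatom x) B.

Definition occurs_clause (x : nat) (c : clause) : bool :=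
  occurs_atom x (head c) || occurs_goal x (body c).

Definition occurs_subst (x : nat) (s : subst) : Prop :=
  s x <> Var x \/ exists y, s y <> Var y /\ occurs x (s y) = true.

(** * Most general unifiers (idempotent and relevant, as computed by the
    standard unification algorithm) *)
Definition unifier (s : subst) (a1 a2 : atom) : Prop := aapply s a1 = aapply s a2.
Definition unifiable (a1 a2 : atom) : Prop := exists s, unifier s a1 a2.

Definition is_mgu (s : subst) (a1 a2 : atom) : Prop :=
  unifier s a1 a2 /\
  (forall t, unifier t a1 a2 -> exists e, forall x, t x = tapply e (s x)) /\
  (forall x, tapply s (s x) = s x) /\
  (forall x, occurs_subst x s -> occurs_atom x a1 = true \/ occurs_atom x a2 = true).

Definition renaming (r : nat -> nat) : Prop :=
  exists r', (forall x, r' (r x) = x) /\ (forall x, r (r' x) = x).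

Definition rename_clause (r : nat -> nat) (c : clause) : clause :=
  mkClause (aapply (fun x => Var (r x)) (head c))
           (gapply (fun x => Var (r x)) (body c)).

Definition variant (c c' : clause) : Prop :=
  exists r, renaming r /\ c' = rename_clause r c.

Definition fresh (used : nat -> Prop) (c' : clause) : Prop :=
  forall x, occurs_clause x c' = true -> ~ used x.

(* [clauses_rel used A P cs] : cs is clauses(A,P), i.e. the sequence, in
   program order, of the clauses of P whose heads unify with A, each renamed
   apart from the [used] variables (the variables of the execution so far,
   which include those of A) and from each other. *)
Inductive clauses_rel (used : nat -> Prop) (A : atom) : program -> list clause -> Prop :=
| cl_nil : clauses_rel used A [] []
| cl_keep : forall c P c' cs,
    variant c c' -> fresh used c' ->
    (forall x, occurs_clause x c' = true -> existsb (occurs_clause x) cs = false) ->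
    unifiable A (head c') ->
    clauses_rel used A P cs ->
    clauses_rel used A (c :: P) (c' :: cs)
| cl_skip : forall c P cs,
    (forall c', variant c c' -> fresh used c' -> ~ unifiable A (head c')) ->
    clauses_rel used A P cs ->
    clauses_rel used A (c :: P) cs.

(* A labeled goal B^c_delta (c optional), or a final goal SUCCESS_delta / FAIL_delta *)
Inductive elem : Type :=
| EGoal : goal -> option clause -> subst -> elem
| ESucc : subst -> elem
| EFail : subst -> elem.

(* < S ]|[ S' > : (concrete part, symbolic part) *)
Definition state := (list elem * list elem)%type.

Definition occurs_elem (x : nat) (e : elem) : Prop :=
  match e with
  | EGoal B oc d =>
      occurs_goal x B = true \/
      (exists c, oc = Some c /\ occurs_clause x c = true) \/ occurs_subst x d
  | ESucc d => occurs_subst x d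
  | EFail d => occurs_subst x d
  end.

Definition occurs_state (x : nat) (C : state) : Prop :=
  (exists e, In e (fst C) /\ occurs_elem x e) \/
  (exists e, In e (snd C) /\ occurs_elem x e).

(** * Concolic transition relation; [used] = variables of the execution so
    far (used for renaming apart). *)
Inductive cstep (P : program) (used : nat -> Prop) : state -> state -> Prop :=
| cs_success : forall d S th S',
    cstep P used (EGoal [] None d :: S, EGoal [] None th :: S')
                 ([ESucc d], [ESucc th])
| cs_failure : forall B d B' th,
    cstep P used ([EGoal (GFail :: B) None d], [EGoal (GFail :: B') None th])
                 ([EFail d], [EFail th])
| cs_backtrack : forall B d S B' th S',
    S <> [] ->
    cstep P used (EGoal (GFail :: B) None d :: S, EGoal (GFail :: B') None th :: S')
                 (S, S')
| cs_choice : forall A B d S A' B' th S' cs,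
    clauses_rel used A P cs -> cs <> [] ->
    cstep P used (EGoal (GAt A :: B) None d :: S, EGoal (A' :: B') None th :: S')
                 (map (fun c => EGoal (GAt A :: B) (Some c) d) cs ++ S,
                  map (fun c => EGoal (A' :: B') (Some c) th) cs ++ S')
| cs_choice_fail : forall A B d S A' B' th S',
    clauses_rel used A P [] ->
    cstep P used (EGoal (GAt A :: B) None d :: S, EGoal (A' :: B') None th :: S')
                 (EGoal (GFail :: B) None d :: S, EGoal (GFail :: B') None th :: S')
| cs_unfold : forall A B d S A' B' th S' c sg sg',
    is_mgu sg A (head c) -> is_mgu sg' A' (head c) ->
    cstep P used (EGoal (GAt A :: B) (Some c) d :: S,
                  EGoal (GAt A' :: B') (Some c) th :: S')
                 (EGoal (gapply sg (body c ++ B)) None (compose d sg) :: S,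
                  EGoal (gapply sg' (body c ++ B')) None (compose th sg') :: S').

Definition init_state (p : nat) (ts : list term) (xs : list nat) : state :=
  ([EGoal [GAt (Atom p ts)] None id_subst],
   [EGoal [GAt (Atom p (map Var xs))] None id_subst]).

Definition concolic_exec (P : program) (Cs : nat -> state) (m : nat) : Prop :=
  forall i, i < m ->
    cstep P (fun x => exists j, j <= i /\ occurs_state x (Cs j)) (Cs i) (Cs (S i)).

(* Main.v *)
Require Import Defs.
From Stdlib Require Import List Arith Bool Lia.
Import ListNotations.

Fixpoint term_ind2 (Pr : term -> Prop) (Hv : forall x, Pr (Var x))
  (Hf : forall f ts, Forall Pr ts -> Pr (Fn f ts)) (t : term) : Pr t :=
  match t with
  | Var x => Hv x
  | Fn f ts => Hf f ts ((fix go (l : list term) : Forall Pr l :=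
       match l with [] => Forall_nil _ | u :: l' => Forall_cons _ (term_ind2 Pr Hv Hf u) (go l') end) ts)
  end.

Lemma tapply_ext : forall t s1 s2, (forall x, occurs x t = true -> s1 x = s2 x) ->
  tapply s1 t = tapply s2 t.
Proof.
  induction t as [x|f ts IH] using term_ind2; intros s1 s2 H; simpl.
  - apply H; simpl; apply Nat.eqb_refl.
  - f_equal. apply map_ext_in. intros u Hu. rewrite Forall_forall in IH.
    apply IH; auto. intros x Hx. apply H. simpl. apply existsb_exists. eauto.
Qed.

Lemma tapply_comp : forall t s d, tapply s (tapply d t) = tapply (compose d s) t.
Proof.
  induction t as [x|f ts IH] using term_ind2; intros s d; simpl; auto.
  rewrite map_map. f_equal. apply map_ext_in. intros u Hu.
  rewrite Forall_forall in IH. auto.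
Qed.

Lemma tapply_id : forall t, tapply Var t = t.
Proof.
  induction t as [x|f ts IH] using term_ind2; simpl; auto.
  f_equal. transitivity (map id ts); [|apply map_id]. apply map_ext_in.
  intros u Hu. rewrite Forall_forall in IH. auto.
Qed.

Lemma occurs_tapply : forall t s x, occurs x (tapply s t) = true ->
  exists y, occurs y t = true /\ occurs x (s y) = true.
Proof.
  induction t as [z|f ts IH] using term_ind2; intros s x H; simpl in *.
  - exists z. rewrite Nat.eqb_refl. auto.
  - apply existsb_exists in H. destruct H as [u [Hu Hx]].
    apply in_map_iff in Hu. destruct Hu as [v [<- Hv]].
    rewrite Forall_forall in IH. destruct (IH v Hv s x Hx) as [y [Hy1 Hy2]].
    exists y. split; auto. apply existsb_exists. eauto.
Qed.

Lemma aapply_ext : forall a s1 s2, (forall x, occurs_atom x a = true -> s1 x = s2 x) ->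
  aapply s1 a = aapply s2 a.
Proof.
  intros [p ts] s1 s2 H; simpl. f_equal. apply map_ext_in. intros u Hu.
  apply tapply_ext. intros x Hx. apply H. simpl. apply existsb_exists; eauto.
Qed.

Lemma aapply_comp : forall a s d, aapply s (aapply d a) = aapply (compose d s) a.
Proof.
  intros [p ts] s d; simpl. rewrite map_map. f_equal. apply map_ext. intros; apply tapply_comp.
Qed.

Lemma aapply_id : forall a, aapply Var a = a.
Proof.
  intros [p ts]; simpl. f_equal. transitivity (map id ts); [|apply map_id].
  apply map_ext. intros; apply tapply_id.
Qed.

Lemma occurs_aapply : forall a s x, occurs_atom x (aapply s a) = true ->
  exists y, occurs_atom y a = true /\ occurs x (s y) = true.
Proof.
  intros [p ts] s x H; simpl in *. apply existsb_exists in H.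
  destruct H as [u [Hu Hx]]. apply in_map_iff in Hu. destruct Hu as [v [<- Hv]].
  destruct (occurs_tapply v s x Hx) as [y [H1 H2]]. exists y; split; auto.
  apply existsb_exists; eauto.
Qed.

Lemma gapply_ext : forall g s1 s2, (forall x, occurs_goal x g = true -> s1 x = s2 x) ->
  gapply s1 g = gapply s2 g.
Proof.
  induction g as [|a g IH]; intros s1 s2 H; simpl; auto.
  f_equal.
  - destruct a as [|a]; simpl; auto. f_equal. apply aapply_ext. intros x Hx.
    apply H. simpl. rewrite Hx. auto.
  - apply IH. intros x Hx. apply H. simpl. rewrite Hx, orb_true_r. auto.
Qed.

Lemma gapply_comp : forall g s d, gapply s (gapply d g) = gapply (compose d s) g.
Proof.
  induction g as [|a g IH]; intros s d; simpl; auto. rewrite IH. f_equal.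
  destruct a; simpl; auto. rewrite aapply_comp; auto.
Qed.

Lemma gapply_id : forall g, gapply Var g = g.
Proof.
  induction g as [|a g IH]; simpl; auto. rewrite IH. destruct a; simpl; auto.
  rewrite aapply_id; auto.
Qed.

Definition rel (pX pt : atom) (e e' : elem) : Prop :=
  match e with
  | EGoal B c d => exists D th, e' = EGoal D c th /\
      (exists eta, gapply eta D = B /\ aapply eta (aapply th pX) = aapply d pt) /\
      (forall cl, c = Some cl -> forall x, occurs_clause x cl = true ->
          occurs_goal x D = false /\ occurs_atom x (aapply th pX) = false)
  | _ => True
  end.

Lemma clauses_fresh : forall used A P cs, clauses_rel used A P cs ->
  forall c, In c cs -> fresh used c.
Proof.
  induction 1 as [|c P c' cs Hv Hfr _ _ _ IH|c P cs _ _ IH]; simpl; intros c0 Hin; try tauto.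
  destruct Hin as [<-|Hin]; auto.
  auto.
Qed.

Lemma step_inv : forall P U p ts xs C C',
  (forall x, occurs_state x C -> U x) ->
  (forall x, In x xs -> U x) ->
  Forall2 (rel (Atom p (map Var xs)) (Atom p ts)) (fst C) (snd C) ->
  cstep P U C C' ->
  Forall2 (rel (Atom p (map Var xs)) (Atom p ts)) (fst C') (snd C').
Proof.
  intros P U p ts xs C C' HU Hxs HI Hs.
  set (pX := Atom p (map Var xs)) in *. set (pt := Atom p ts) in *.
  destruct Hs; simpl in *.
  - constructor; simpl; auto.
  - constructor; simpl; auto.
  - inversion HI; auto.
  - inversion HI as [|e1 e2 l1 l2 Hr Hrest]; subst.
    destruct Hr as [D [th0 [Heq [[eta [Hg Ha]] _]]]]. injection Heq as <- <-.
    apply Forall2_app; auto.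
    assert (Hf : forall c, In c cs -> fresh U c) by (eapply clauses_fresh; eauto).
    clear H H0. induction cs as [|c cs IHcs]; simpl; constructor.
    + exists (A' :: B'), th. split; auto. split; [exists eta; auto|].
      intros cl Hcl x Hx. injection Hcl as <-.
      assert (HnU : ~ U x) by (apply (Hf c); simpl; auto).
      split.
      * destruct (occurs_goal x (A' :: B')) eqn:E; auto. exfalso; apply HnU, HU.
        right. exists (EGoal (A' :: B') None th). simpl; auto.
      * destruct (occurs_atom x (aapply th pX)) eqn:E; auto. exfalso; apply HnU.
        destruct (occurs_aapply _ _ _ E) as [y [Hy1 Hy2]].
        unfold pX in Hy1; simpl in Hy1. apply existsb_exists in Hy1.
        destruct Hy1 as [u [Hu Hyu]]. apply in_map_iff in Hu. destruct Hu as [z [<- Hz]].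
        simpl in Hyu. apply Nat.eqb_eq in Hyu; subst z.
        assert (Hcase : th y = Var y \/ th y <> Var y).
        { destruct (th y) as [z|f l] eqn:Ety; [|right; discriminate].
          destruct (Nat.eq_dec z y) as [->|Hne]; [left; auto|right; congruence]. }
        destruct Hcase as [Hv|Hv].
        -- rewrite Hv in Hy2. simpl in Hy2. apply Nat.eqb_eq in Hy2; subst. auto.
        -- apply HU. right. exists (EGoal (A' :: B') None th). simpl. split; auto.
           right; right. right. exists y. auto.
    + apply IHcs. intros; apply Hf; simpl; auto.
  - inversion HI as [|e1 e2 l1 l2 Hr Hrest]; subst.
    destruct Hr as [D [th0 [Heq [[eta [Hg Ha]] _]]]]. injection Heq as <- <-.
    constructor; auto. exists (GFail :: B'), th. split; auto. split.
    + exists eta. simpl in Hg. injection Hg as _ Hg. simpl. rewrite Hg. auto.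
    + discriminate.
  - inversion HI as [|e1 e2 l1 l2 Hr Hrest]; subst.
    destruct Hr as [D [th0 [Heq [[eta [Hg Ha]] Hfr]]]]. injection Heq as <- <-.
    specialize (Hfr c eq_refl).
    set (mu := fun x => if occurs_clause x c then Var x else eta x).
    simpl in Hg. injection Hg as HgA HgB.
    assert (HmuA : aapply mu A' = A).
    { rewrite <- HgA. apply aapply_ext. intros x Hx. unfold mu.
      destruct (occurs_clause x c) eqn:E; auto.
      destruct (Hfr x E) as [H1 _]. simpl in H1. rewrite Hx in H1. discriminate. }
    assert (HmuB : gapply mu B' = B).
    { rewrite <- HgB. apply gapply_ext. intros x Hx. unfold mu.
      destruct (occurs_clause x c) eqn:E; auto.
      destruct (Hfr x E) as [H1 _]. simpl in H1. rewrite Hx, orb_true_r in H1. discriminate. }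
    assert (HmuX : aapply mu (aapply th pX) = aapply eta (aapply th pX)).
    { apply aapply_ext. intros x Hx. unfold mu.
      destruct (occurs_clause x c) eqn:E; auto.
      destruct (Hfr x E) as [_ H1]. congruence. }
    assert (HmuH : aapply mu (Defs.head c) = Defs.head c).
    { rewrite <- (aapply_id (Defs.head c)) at 2. apply aapply_ext. intros x Hx. unfold mu.
      unfold occurs_clause. rewrite Hx. auto. }
    assert (HmuBd : gapply mu (body c) = body c).
    { rewrite <- (gapply_id (body c)) at 2. apply gapply_ext. intros x Hx. unfold mu.
      unfold occurs_clause. rewrite Hx, orb_true_r. auto. }
    destruct H as [Hu _]. destruct H0 as [_ [Hmg _]].
    destruct (Hmg (compose mu sg)) as [e He].
    { unfold unifier. rewrite <- !aapply_comp, HmuA, HmuH. exact Hu. }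
    assert (Hce : forall x, compose sg' e x = compose mu sg x).
    { intros x. exact (eq_sym (He x)). }
    constructor; auto.
    exists (gapply sg' (body c ++ B')), (compose th sg'). split; auto. split.
    + exists e. split.
      * rewrite gapply_comp. rewrite (gapply_ext _ _ (compose mu sg)) by auto.
        rewrite <- gapply_comp. unfold gapply at 2. rewrite map_app.
        fold (gapply mu (body c)). fold (gapply mu B'). rewrite HmuBd, HmuB. reflexivity.
      * rewrite <- aapply_comp, aapply_comp.
        rewrite (aapply_ext _ _ (compose mu sg)) by auto.
        rewrite <- aapply_comp, HmuX, Ha, aapply_comp. reflexivity.
    + discriminate.
Qed.
Fixpoint build (xs : list nat) (ts : list term) (x : nat) : term :=
  match xs, ts with
  | x0 :: xs', t0 :: ts' => if Nat.eqb x x0 then t0 else build xs' ts' x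
  | _, _ => Var x
  end.

Lemma build_map : forall xs ts, NoDup xs -> length xs = length ts -> map (build xs ts) xs = ts.
Proof.
  induction xs as [|x0 xs IH]; intros [|t0 ts] Hnd Hl; simpl in *; try discriminate; auto.
  inversion Hnd; subst. rewrite Nat.eqb_refl. f_equal.
  transitivity (map (build xs ts) xs); [|apply IH; auto]. apply map_ext_in. intros x Hx.
  destruct (Nat.eqb x x0) eqn:E; auto. apply Nat.eqb_eq in E; subst; contradiction.
Qed.

Theorem theorem1 :
  forall (P : program) (p : nat) (ts : list term) (xs : list nat)
         (Cs : nat -> state) (m : nat),
    NoDup xs ->
    length xs = length ts ->
    (forall x, In x xs -> existsb (occurs x) ts = false) ->
    Cs 0 = init_state p ts xs ->
    concolic_exec P Cs m ->
    forall i, i <= m ->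
    forall (B : goal) (c : option clause) (d : subst) (S : list elem)
           (D : goal) (c' : option clause) (th : subst) (S' : list elem),
      Cs i = (EGoal B c d :: S, EGoal D c' th :: S') ->
      length S = length S' /\
      goal_le D B /\
      c = c' /\
      atom_le (aapply th (Atom p (map Var xs))) (aapply d (Atom p ts)).
Proof.
  intros P p ts xs Cs m Hnd Hl _ H0 Hex.
  assert (Inv : forall i, i <= m -> Forall2 (rel (Atom p (map Var xs)) (Atom p ts)) (fst (Cs i)) (snd (Cs i))).
  { induction i as [|i IH]; intros Hi.
    - rewrite H0. simpl. constructor; auto.
      exists [GAt (Atom p (map Var xs))], id_subst. split; auto. split; [|discriminate].
      exists (build xs ts). unfold id_subst. rewrite !aapply_id. simpl.
      rewrite map_map. simpl. rewrite build_map by auto. auto.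
    - eapply step_inv; [| | apply IH; lia | apply Hex; lia].
      + intros x Hx. exists i. auto.
      + intros x Hx. exists 0. split; [lia|]. rewrite H0. right.
        exists (EGoal [GAt (Atom p (map Var xs))] None id_subst). simpl. split; auto.
        left. rewrite orb_false_r. apply existsb_exists. exists (Var x).
        split; [apply in_map; auto| simpl; apply Nat.eqb_refl]. }
  intros i Hi B c d S D c' th S' HC.
  specialize (Inv i Hi). rewrite HC in Inv. simpl in Inv.
  inversion Inv as [|e1 e2 l1 l2 Hr Hrest]; subst.
  destruct Hr as [D0 [th0 [Heq [[eta [Hg Ha]] _]]]]. injection Heq as <- <- <-.
  repeat split.
  - eapply Forall2_length; eauto.
  - exists eta; auto.
  - exists eta; auto.
Qed.
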